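(* Let $\mathcal{Q}=(Q,\leq^Q)$ with $Q=\{1,\dots,k\}$ and $\mathcal{P}=(P,\leq^P)$ be finite posets, let $(C_1,\dots,C_w)$ be any chain partition of $\mathcal{P}$, and let $f:Q\to\{1,\dots,w\}$ be arbitrary. Let $G=G(\mathcal{P},\mathcal{Q},f)$ be the graph whose vertex set is a disjoint union $V_1\,\dot\cup\cdots\dot\cup\, V_k$ where $V_i$ is a copy of $C_{f(i)}$, and where for $p\in V_i$, $q\in V_j$ being copies of $p'\in C_{f(i)}$, $q'\in C_{f(j)}$, we have $pq\in E(G)$ iff $i\neq j$ and both ($p'\leq^P q'$ iff $i\leq^Q j$) and ($p'\geq^P q'$ iff $i\geq^Q j$). Then $G$, with the colour classes $V_1,\dots,V_k$, contains a clique of size $|Q|$ if and only if $\mathcal{Q}$ has an embedding $e$ into $\mathcal{P}$ compatible with $f$ (i.e., $e(q)\in C_{f(q)}$ for all $q\in Q$).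
   Context: A chain partition of $\mathcal{P}$ is a partition of $P$ into chains (sets of pairwise comparable elements). An embedding from $\mathcal{Q}$ into $\mathcal{P}$ is an injective function $e:Q\to P$ such that $q\leq^Q q'$ iff $e(q)\leq^P e(q')$ for all $q,q'\in Q$. A clique is a set of pairwise adjacent vertices. *)

(* Defs.v *)
From mathcomp Require Import all_boot.
Set Implicit Arguments. Unset Strict Implicit. Unset Printing Implicit Defensive.

Definition is_poset (T : finType) (le : rel T) : Prop :=
  reflexive le /\ antisymmetric le /\ transitive le.

Definition is_chain (T : finType) (le : rel T) (A : {set T}) : Prop :=
  {in A &, forall x y, le x y || le y x}.

Definition chain_partition (P : finType) (leP : rel P) (w : nat)
    (C : 'I_w -> {set P}) : Prop :=
  [/\ forall a, C a != set0,
      forall a b, a != b -> [disjoint C a & C b],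
      forall p, exists a, p \in C a
    & forall a, is_chain leP (C a)].

(* Vertices of G(P,Q,f): pairs (i, p) with p in C_{f(i)} (copy of p in V_i). *)
Definition Gvert (P : finType) (k w : nat) (C : 'I_w -> {set P})
    (f : 'I_k -> 'I_w) : {set 'I_k * P} :=
  [set x | x.2 \in C (f x.1)].

Definition Gadj (P : finType) (leP : rel P) (k : nat) (leQ : rel 'I_k)
    (x y : 'I_k * P) : bool :=
  [&& x.1 != y.1,
      leP x.2 y.2 == leQ x.1 y.1 &
      leP y.2 x.2 == leQ y.1 x.1].

Definition is_clique (V : finType) (adj : rel V) (S : {set V}) : Prop :=
  {in S &, forall x y, x != y -> adj x y}.

Definition is_embedding (P : finType) (leP : rel P) (k : nat)
    (leQ : rel 'I_k) (e : 'I_k -> P) : Prop :=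
  injective e /\ forall q q', leQ q q' = leP (e q) (e q').

(* Main.v *)
Require Import Defs.
From mathcomp Require Import all_boot.

Theorem proposition4p1 (k : nat) (leQ : rel 'I_k)
    (P : finType) (leP : rel P) (w : nat) (C : 'I_w -> {set P})
    (f : 'I_k -> 'I_w) :
  is_poset leQ -> is_poset leP -> chain_partition leP C ->
  (exists S : {set 'I_k * P},
      [/\ S \subset Gvert C f, #|S| = k & is_clique (Gadj leP leQ) S])
  <->
  (exists e : 'I_k -> P,
      is_embedding leP leQ e /\ forall q, e q \in C (f q)).
Proof.
move=> [rQ [aQ tQ]] [rP [aP tP]] _; split.
- move=> [S [sub cardS cl]].
  have inj1 : {in S &, injective (fun x : 'I_k * P => x.1)}.
    move=> x y xS yS /= e1; apply/eqP; apply/negPn/negP => nxy.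
    by move: (cl x y xS yS nxy); rewrite /Gadj e1 eqxx.
  have H : forall q, exists p, (q, p) \in S.
    move=> q.
    have Fe : [set x.1 | x in S] = [set: 'I_k].
      apply/eqP; rewrite eqEcard subsetT /= cardsT card_ord.
      by rewrite card_in_imset // cardS.
    have : q \in [set x.1 | x in S] by rewrite Fe inE.
    move=> /imsetP [[q' p] xS /= ->]; by exists p.
  exists (fun q => xchoose (H q)).
  have eS : forall q, (q, xchoose (H q)) \in S := fun q => xchooseP (H q).
  have key : forall q q', leQ q q' = leP (xchoose (H q)) (xchoose (H q')).
    move=> q q'; have [->|nqq] := eqVneq q q'; first by rewrite rQ rP.
    have nx : (q, xchoose (H q)) != (q', xchoose (H q')).
      by apply: contra nqq => /eqP [->].
    by move: (cl _ _ (eS q) (eS q') nx) => /and3P [_ /eqP -> _].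
  split; last first.
    move=> q; move/subsetP: sub => /(_ _ (eS q)); by rewrite inE.
  split=> // q q' eqe; apply: aQ; by rewrite !key eqe rP.
- move=> [e [[ie he] inC]].
  exists [set (q, e q) | q : 'I_k]; split.
  + apply/subsetP => x /imsetP [q _ ->]; by rewrite inE /=.
  + rewrite card_imset ?card_ord //; by move=> a b [].
  + move=> x y /imsetP [q _ ->] /imsetP [q' _ ->] nxy.
    have nq : q != q' by apply: contra nxy => /eqP ->.
    by rewrite /Gadj /= nq !he !eqxx.
Qed.
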